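(* Let $\mathcal R$ be a DCTRS and let $\langle s,\pi\rangle$, $\langle t,\pi'\rangle$ be safe pairs. For all $k,m\ge0$: $\langle s,\pi\rangle\rightharpoonup_{\mathcal R_k}^{m}\langle t,\pi'\rangle$ if and only if $\langle t,\pi'\rangle\leftharpoondown_{\mathcal R_k}^{m}\langle s,\pi\rangle$.
   Context: Terms $\mathcal T(\mathcal F,\mathcal V)$; $\mathrm{Pos}(t)$ positions ($\epsilon$ root), $t|_p$ subterm, $t[u]_p$ replacement, $\mathrm{Var}(t_1,\dots,t_n)$ the variables occurring in the $t_i$, $\mathrm{Dom}(\sigma)=\{x\mid x\sigma\ne x\}$, $\sigma|_V$ restriction. A DCTRS $\mathcal R$ is a finite set of labelled conditional rules $\beta: l\to r\Leftarrow s_1\twoheadrightarrow t_1,\dots,s_n\twoheadrightarrow t_n$ ($l\notin\mathcal V$) with $\mathrm{Var}(r)\subseteq\mathrm{Var}(l,s_1,\dots,s_n,t_1,\dots,t_n)$ and $\mathrm{Var}(s_i)\subseteq\mathrm{Var}(l,t_1,\dots,t_{i-1})$ for all $i$; labels are unique and rule variables are never renamed. For such a rule let $V_\beta=(\mathrm{Var}(l)\setminus\mathrm{Var}(r,s_1,\dots,s_n,t_1,\dots,t_n))\cup\bigcup_{i=1}^n(\mathrm{Var}(t_i)\setminus\mathrm{Var}(r,s_{i+1},\dots,s_n))$. Traces: $[\,]$ is a trace, and if $\pi,\pi_1,\dots,\pi_n$ are traces, $\beta$ labels a rule with $n$ conditions, $p$ is a position and $\sigma$ a ground substitution, then $\beta(p,\sigma,\pi_1,\dots,\pi_n):\pi$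 is a trace. A trace $\pi$ is safe iff for every trace term $\beta(p,\sigma,\pi_1,\dots,\pi_n)$ in $\pi$, $\sigma$ is ground with $\mathrm{Dom}(\sigma)=V_\beta$ and $\pi_1,\dots,\pi_n$ are safe; $\langle s,\pi\rangle$ ($s$ ground) is safe iff $\pi$ is. Depth-indexed relations on safe pairs: $\rightharpoonup_{\mathcal R_0}$ and $\leftharpoondown_{\mathcal R_0}$ are empty. $\langle s,\pi\rangle\rightharpoonup_{\mathcal R_{k+1}}\langle t,\beta(p,\sigma',\pi_1,\dots,\pi_n):\pi\rangle$ iff there are $p\in\mathrm{Pos}(s)$, rule $\beta$ and ground $\sigma$ with $s|_p=l\sigma$, $\langle s_i\sigma,[\,]\rangle\rightharpoonup_{\mathcal R_k}^{*}\langle t_i\sigma,\pi_i\rangle$ for all $i$, $t=s[r\sigma]_p$, $\sigma'=\sigma|_{V_\beta}$. $\langle t,\beta(p,\sigma',\pi_1,\dots,\pi_n):\pi\rangle\leftharpoondown_{\mathcal R_{k+1}}\langle s,\pi\rangle$ iff this pair is safe, $\beta: l\to r\Leftarrow s_1\twoheadrightarrow t_1,\dots,s_n\twoheadrightarrow t_n\in\mathcal R$, and there is a ground $\theta$ with $\mathrm{Dom}(\theta)=\mathrm{Var}(r,s_1,\dots,s_n)\setminus\mathrm{Dom}(\sigma')$, $t|_p=r\theta$, $\langle t_i\theta\sigma',\pi_i\rangle\leftharpoondown_{\mathcal R_k}^{*}\langle s_i\theta\sigma',[\,]\rangle$ for all $i$, and $s=t[l\theta\sigma']_p$. ($\rightharpoonup_{\mathcal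 R}=\bigcup_k\rightharpoonup_{\mathcal R_k}$, $\leftharpoondown_{\mathcal R}=\bigcup_k\leftharpoondown_{\mathcal R_k}$.) $\to^{m}$ denotes exactly $m$ steps. *)

(* Defs.v *)
From Stdlib Require Import List Arith.
Import ListNotations.

Section Defs.
Variables (F V L : Type).

Inductive term : Type :=
| Var : V -> term
| Fun : F -> list term -> term.

Fixpoint vars (t : term) : list V :=
  match t with
  | Var x => [x]
  | Fun _ ts => flat_map vars ts
  end.

Definition ground (t : term) : Prop := vars t = [].

(* Positions: sequences of argument indices (0-based); [] is the root. *)
Definition pos := list nat.

Fixpoint subterm_at (t : term) (p : pos) : option term :=
  match p with
  | [] => Some t
  | i :: p' =>
      match t with
      | Var _ => None
      | Fun _ ts =>
          match nth_error ts i with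
          | Some u => subterm_at u p'
          | None => None
          end
      end
  end.

Fixpoint list_set {A : Type} (l : list A) (i : nat) (a : A) : list A :=
  match l, i with
  | [], _ => []
  | _ :: l', 0 => a :: l'
  | b :: l', S i' => b :: list_set l' i' a
  end.

Fixpoint replace_at (t : term) (p : pos) (u : term) : option term :=
  match p with
  | [] => Some u
  | i :: p' =>
      match t with
      | Var _ => None
      | Fun f ts =>
          match nth_error ts i with
          | Some ti =>
              match replace_at ti p' u with
              | Some ti' => Some (Fun f (list_set ts i ti'))
              | None => None
              end
          | None => None
          end
      end
  end.

Definition subst := V -> term.

Fixpoint app_subst (sigma : subst) (t : term) : term :=
  match t with
  | Var x => sigma x
  | Fun f ts => Fun f (map (app_subst sigma) ts)
  end.

Definition in_dom (sigma : subst) (x : V) : Prop := sigma x <> Var x.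

Definition ground_subst (sigma : subst) : Prop :=
  forall x, in_dom sigma x -> ground (sigma x).

Definition restrict (sigma : subst) (P : V -> Prop) (sigma' : subst) : Prop :=
  forall x, (P x -> sigma' x = sigma x) /\ (~ P x -> sigma' x = Var x).

(* Labelled conditional rules  l -> r <= s1 ->> t1, ..., sn ->> tn *)
Record rule : Type := mkRule {
  lbl : L;
  lhs : term;
  rhs : term;
  conds : list (term * term)
}.

(* Var(l, t_1, ..., t_{i-1})  (i is 0-based here: conditions before index i) *)
Definition dctrs_rule (rl : rule) : Prop :=
  (forall x, lhs rl <> Var x) /\
  (forall x, In x (vars (rhs rl)) ->
     In x (vars (lhs rl)) \/
     exists c, In c (conds rl) /\ (In x (vars (fst c)) \/ In x (vars (snd c)))) /\
  (forall i c, nth_error (conds rl) i = Some c ->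
     forall x, In x (vars (fst c)) ->
       In x (vars (lhs rl)) \/
       exists j c', j < i /\ nth_error (conds rl) j = Some c' /\ In x (vars (snd c'))).

Definition dctrs (R : list rule) : Prop :=
  NoDup (map lbl R) /\ forall rl, In rl R -> dctrs_rule rl.

Definition in_Vbeta (rl : rule) (x : V) : Prop :=
  (In x (vars (lhs rl)) /\
     ~ (In x (vars (rhs rl)) \/
        exists c, In c (conds rl) /\ (In x (vars (fst c)) \/ In x (vars (snd c))))) \/
  (exists i c, nth_error (conds rl) i = Some c /\ In x (vars (snd c)) /\
     ~ (In x (vars (rhs rl)) \/
        exists j c', i < j /\ nth_error (conds rl) j = Some c' /\ In x (vars (fst c')))).

Definition in_vars_rhs_conds (rl : rule) (x : V) : Prop :=
  In x (vars (rhs rl)) \/ exists c, In c (conds rl) /\ In x (vars (fst c)).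

(* Traces: a trace is a list of trace terms beta(p, sigma, pi_1, ..., pi_n) *)
Inductive trace_term : Type :=
| TT : L -> pos -> subst -> list (list trace_term) -> trace_term.

Definition trace := list trace_term.

Section Safe.
Variable R : list rule.

Inductive safe_trace : trace -> Prop :=
| safe_nil : safe_trace []
| safe_cons : forall rl p sigma pis pi,
    In rl R ->
    length pis = length (conds rl) ->
    ground_subst sigma ->
    (forall x, in_dom sigma x <-> in_Vbeta rl x) ->
    (forall pii, In pii pis -> safe_trace pii) ->
    safe_trace pi ->
    safe_trace (TT (lbl rl) p sigma pis :: pi).

Definition safe_pair (a : term * trace) : Prop :=
  ground (fst a) /\ safe_trace (snd a).
End Safe.

Inductive star {A : Type} (rel : A -> A -> Prop) : A -> A -> Prop :=
| star_refl : forall a, star rel a a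
| star_step : forall a b c, rel a b -> star rel b c -> star rel a c.

Inductive nsteps {A : Type} (rel : A -> A -> Prop) : nat -> A -> A -> Prop :=
| nsteps_0 : forall a, nsteps rel 0 a a
| nsteps_S : forall m a b c, rel a b -> nsteps rel m b c -> nsteps rel (S m) a c.

Fixpoint fwd (R : list rule) (k : nat) : term * trace -> term * trace -> Prop :=
  match k with
  | 0 => fun _ _ => False
  | S k' => fun a b =>
      safe_pair R a /\
      exists (p : pos) (rl : rule) (sigma : subst) (pis : list trace)
             (t : term) (sigma' : subst),
        In rl R /\
        ground_subst sigma /\
        subterm_at (fst a) p = Some (app_subst sigma (lhs rl)) /\
        Forall2 (fun c pii =>
                   star (fwd R k') (app_subst sigma (fst c), [])
                                   (app_subst sigma (snd c), pii))
                (conds rl) pis /\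
        replace_at (fst a) p (app_subst sigma (rhs rl)) = Some t /\
        restrict sigma (in_Vbeta rl) sigma' /\
        b = (t, TT (lbl rl) p sigma' pis :: snd a)
  end.

Fixpoint bwd (R : list rule) (k : nat) : term * trace -> term * trace -> Prop :=
  match k with
  | 0 => fun _ _ => False
  | S k' => fun a b =>
      safe_pair R a /\
      exists (t : term) (p : pos) (sigma' : subst) (pis : list trace)
             (pi : trace) (rl : rule) (theta : subst) (s : term),
        a = (t, TT (lbl rl) p sigma' pis :: pi) /\
        In rl R /\
        ground_subst theta /\
        (forall x, in_dom theta x <-> (in_vars_rhs_conds rl x /\ ~ in_dom sigma' x)) /\
        subterm_at t p = Some (app_subst theta (rhs rl)) /\
        Forall2 (fun c pii =>
                   star (bwd R k')
                        (app_subst sigma' (app_subst theta (snd c)), pii)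
                        (app_subst sigma' (app_subst theta (fst c)), []))
                (conds rl) pis /\
        replace_at t p (app_subst sigma' (app_subst theta (lhs rl))) = Some s /\
        b = (s, pi)
  end.

End Defs.

Arguments Var {F V}.
Arguments Fun {F V}.
Arguments vars {F V}.
Arguments ground {F V}.
Arguments subterm_at {F V}.
Arguments replace_at {F V}.
Arguments app_subst {F V}.
Arguments in_dom {F V}.
Arguments ground_subst {F V}.
Arguments restrict {F V}.
Arguments mkRule {F V L}.
Arguments lbl {F V L}.
Arguments lhs {F V L}.
Arguments rhs {F V L}.
Arguments conds {F V L}.
Arguments dctrs_rule {F V L}.
Arguments dctrs {F V L}.
Arguments in_Vbeta {F V L}.
Arguments in_vars_rhs_conds {F V L}.
Arguments TT {F V L}.
Arguments safe_trace {F V L}.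
Arguments safe_pair {F V L}.
Arguments fwd {F V L}.
Arguments bwd {F V L}.

(* Main.v *)
Require Import Defs.
From Stdlib Require Import List Lia Classical ClassicalEpsilon.
Import ListNotations.

Fixpoint term_ind' {F V : Type} (P : term F V -> Prop) (Hv : forall x, P (Var x))
  (Hf : forall f ts, Forall P ts -> P (Fun f ts)) (t : term F V) {struct t} : P t :=
  match t with
  | Var x => Hv x
  | Fun f ts => Hf f ts ((fix go (l : list (term F V)) : Forall P l :=
      match l with
      | [] => Forall_nil P
      | u :: l' => @Forall_cons _ P u l' (term_ind' P Hv Hf u) (go l')
      end) ts)
  end.

Lemma vars_app {F V : Type} (sg : subst F V) (u : term F V) : forall y,
  In y (vars (app_subst sg u)) <-> exists x, In x (vars u) /\ In y (vars (sg x)).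
Proof.
  induction u as [x|f ts H] using term_ind'; intros y; simpl.
  - split; [intros; exists x; auto | intros [z [[->|[]] Hy]]; auto].
  - rewrite Forall_forall in H. rewrite in_flat_map. split.
    + intros [w [Hw Hy]]. apply in_map_iff in Hw as [u [<- Hu]].
      apply H in Hy as [x [Hx Hy']]; auto. exists x; split; auto.
      apply in_flat_map; eauto.
    + intros [x [Hx Hy]]. apply in_flat_map in Hx as [u [Hu Hxu]].
      exists (app_subst sg u); split; [apply in_map; auto|].
      apply (proj2 (H u Hu y)); eauto.
Qed.

Lemma ground_iff {F V : Type} (t : term F V) : ground t <-> forall y, ~ In y (vars t).
Proof.
  unfold ground; destruct (vars t) as [|a l]; split; intros H.
  - intros y [].
  - reflexivity.
  - discriminate.
  - exfalso; apply (H a); left; auto.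
Qed.

Lemma ground_app {F V : Type} (sg : subst F V) u :
  ground (app_subst sg u) <-> forall x, In x (vars u) -> ground (sg x).
Proof.
  rewrite ground_iff. split.
  - intros H x Hx. apply ground_iff. intros y Hy. apply (H y). apply vars_app; eauto.
  - intros H y Hy. apply vars_app in Hy as [x [Hx Hy]]. specialize (H x Hx).
    rewrite ground_iff in H. eapply H; eauto.
Qed.

Lemma app_ext {F V : Type} (s1 s2 : subst F V) u :
  (forall x, In x (vars u) -> s1 x = s2 x) -> app_subst s1 u = app_subst s2 u.
Proof.
  induction u as [x|f ts H] using term_ind'; intros Hx; simpl.
  - apply Hx; simpl; auto.
  - f_equal. apply map_ext_in. intros a Ha. rewrite Forall_forall in H.
    apply H; auto. intros x Hx'. apply Hx. simpl. apply in_flat_map; eauto.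
Qed.

Lemma app_comp {F V : Type} (s1 s2 : subst F V) u :
  app_subst s1 (app_subst s2 u) = app_subst (fun x => app_subst s1 (s2 x)) u.
Proof.
  induction u as [x|f ts H] using term_ind'; simpl; auto.
  f_equal. rewrite map_map. apply map_ext_in. intros a Ha.
  rewrite Forall_forall in H. auto.
Qed.

Lemma app_id {F V : Type} (u : term F V) : app_subst Var u = u.
Proof.
  induction u as [x|f ts H] using term_ind'; simpl; auto.
  f_equal. rewrite <- (map_id ts) at 2. apply map_ext_in. intros a Ha.
  rewrite Forall_forall in H. auto.
Qed.

Lemma app_ground {F V : Type} (sg : subst F V) u : ground u -> app_subst sg u = u.
Proof.
  intros Hg. rewrite <- (app_id u) at 2. apply app_ext. intros x Hx.
  rewrite ground_iff in Hg. exfalso; eapply Hg; eauto.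
Qed.

Lemma ground_not_var {F V : Type} (u : term F V) x : ground u -> u <> Var x.
Proof. intros H ->. discriminate H. Qed.

Lemma nth_list_set_same {A} (l : list A) i a b :
  nth_error l i = Some a -> nth_error (list_set l i b) i = Some b.
Proof.
  revert i; induction l as [|c l IH]; intros [|i] H; simpl in *; try discriminate; auto.
Qed.

Lemma list_set_nth {A} (l : list A) i a : nth_error l i = Some a -> list_set l i a = l.
Proof.
  revert i; induction l as [|c l IH]; intros [|i] H; simpl in *; try discriminate.
  - inversion H; auto.
  - rewrite IH; auto.
Qed.

Lemma list_set_set {A} (l : list A) i a b : list_set (list_set l i a) i b = list_set l i b.
Proof.
  revert i; induction l as [|c l IH]; intros [|i]; simpl; auto. rewrite IH; auto.
Qed.

Lemma in_list_set {A} (l : list A) i a w : In w (list_set l i a) -> In w l \/ w = a.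
Proof.
  revert i; induction l as [|c l IH]; intros [|i] H; simpl in *; auto.
  - destruct H; auto.
  - destruct H; auto. apply IH in H; tauto.
Qed.

Lemma replace_sub {F V : Type} (p : pos) : forall (t u t' : term F V),
  replace_at t p u = Some t' -> subterm_at t' p = Some u.
Proof.
  induction p as [|i p IH]; intros t u t' H; simpl in *.
  - inversion H; auto.
  - destruct t as [x|f ts]; [discriminate|].
    destruct (nth_error ts i) as [ti|] eqn:E; [|discriminate].
    destruct (replace_at ti p u) as [ti'|] eqn:E2; [|discriminate].
    inversion H; subst. simpl. rewrite (nth_list_set_same _ _ _ _ E). eauto.
Qed.

Lemma sub_replace {F V : Type} (p : pos) : forall (t v : term F V),
  subterm_at t p = Some v -> replace_at t p v = Some t.
Proof.
  induction p as [|i p IH]; intros t v H; simpl in *.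
  - inversion H; auto.
  - destruct t as [x|f ts]; [discriminate|].
    destruct (nth_error ts i) as [ti|] eqn:E; [|discriminate].
    rewrite (IH _ _ H). rewrite (list_set_nth _ _ _ E). auto.
Qed.

Lemma replace_replace {F V : Type} (p : pos) : forall (t u v t' : term F V),
  replace_at t p u = Some t' -> replace_at t' p v = replace_at t p v.
Proof.
  induction p as [|i p IH]; intros t u v t' H; simpl in *; auto.
  destruct t as [x|f ts]; [discriminate|].
  destruct (nth_error ts i) as [ti|] eqn:E; [|discriminate].
  destruct (replace_at ti p u) as [ti'|] eqn:E2; [|discriminate].
  inversion H; subst. rewrite (nth_list_set_same _ _ _ _ E).
  rewrite (IH _ _ _ _ E2). destruct (replace_at ti p v); auto.
  rewrite list_set_set; auto.
Qed.

Lemma sub_vars {F V : Type} (p : pos) : forall (t v : term F V) y,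
  subterm_at t p = Some v -> In y (vars v) -> In y (vars t).
Proof.
  induction p as [|i p IH]; intros t v y H Hy; simpl in *.
  - inversion H; subst; auto.
  - destruct t as [x|f ts]; [discriminate|].
    destruct (nth_error ts i) as [ti|] eqn:E; [|discriminate].
    simpl. apply in_flat_map. exists ti. split; [eapply nth_error_In; eauto | eauto].
Qed.

Lemma replace_vars {F V : Type} (p : pos) : forall (t u t' : term F V) y,
  replace_at t p u = Some t' -> In y (vars t') -> In y (vars t) \/ In y (vars u).
Proof.
  induction p as [|i p IH]; intros t u t' y H Hy; simpl in *.
  - inversion H; subst; auto.
  - destruct t as [x|f ts]; [discriminate|].
    destruct (nth_error ts i) as [ti|] eqn:E; [|discriminate].
    destruct (replace_at ti p u) as [ti'|] eqn:E2; [|discriminate].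
    inversion H; subst. simpl in Hy. apply in_flat_map in Hy as [w [Hw Hy]].
    apply in_list_set in Hw as [Hw| ->].
    + left. simpl. apply in_flat_map; eauto.
    + destruct (IH _ _ _ _ E2 Hy); auto. left. simpl. apply in_flat_map.
      exists ti; split; auto. eapply nth_error_In; eauto.
Qed.

Lemma sub_ground {F V : Type} p (t v : term F V) :
  ground t -> subterm_at t p = Some v -> ground v.
Proof.
  rewrite !ground_iff. intros G H y Hy. eapply G. eapply sub_vars; eauto.
Qed.

Lemma star_snoc {A} (r : A -> A -> Prop) a b c : star r a b -> r b c -> star r a c.
Proof.
  induction 1; intros; [econstructor; [eauto|constructor] | econstructor; eauto].
Qed.

Lemma star_rev {A} (r r' : A -> A -> Prop) (P : A -> Prop) :
  (forall a b, r a b -> P a) -> (forall a b, P a -> P b -> r a b -> r' b a) ->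
  forall a b, star r a b -> P b -> star r' b a.
Proof.
  intros Hr Heq a b H. induction H as [a|a b c Hab Hbc IH]; intros Pc.
  - constructor.
  - assert (Pb : P b) by (inversion Hbc; subst; [assumption | eapply Hr; eassumption]).
    apply star_snoc with b; [apply IH, Pc | apply Heq; eauto].
Qed.

Lemma nsteps_snoc {A} (r : A -> A -> Prop) m a b c :
  nsteps r m a b -> r b c -> nsteps r (S m) a c.
Proof.
  induction 1; intros; [econstructor; [eauto|constructor] | econstructor; eauto].
Qed.

Lemma nsteps_rev {A} (r r' : A -> A -> Prop) (P : A -> Prop) :
  (forall a b, r a b -> P a) -> (forall a b, P a -> P b -> r a b -> r' b a) ->
  forall m a b, nsteps r m a b -> P b -> nsteps r' m b a.
Proof.
  intros Hr Heq m a b H. induction H as [a|m a b c Hab Hbc IH]; intros Pc.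
  - constructor.
  - assert (Pb : P b) by (inversion Hbc; subst; [assumption | eapply Hr; eassumption]).
    apply nsteps_snoc with b; [apply IH, Pc | apply Heq; eauto].
Qed.

Lemma star_inv {A} (r : A -> A -> Prop) a b : star r a b -> a = b \/ exists c, r a c.
Proof. intros H; destruct H; eauto. Qed.

Lemma Forall2_nth {A B} (P : A -> B -> Prop) l1 l2 i a :
  Forall2 P l1 l2 -> nth_error l1 i = Some a -> exists b, nth_error l2 i = Some b /\ P a b.
Proof.
  intros H; revert i; induction H; intros [|i] Hi; simpl in Hi; try discriminate.
  - inversion Hi; subst; eexists; simpl; eauto.
  - simpl; eauto.
Qed.

Lemma Forall2_impl_in {A B} (P Q : A -> B -> Prop) l1 l2 :
  (forall a b, In a l1 -> In b l2 -> P a b -> Q a b) -> Forall2 P l1 l2 -> Forall2 Q l1 l2.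
Proof.
  intros HQ H; induction H; constructor; simpl in *; auto.
Qed.

Lemma lbl_inj {F V L : Type} (R : list (rule F V L)) r1 r2 :
  NoDup (map lbl R) -> In r1 R -> In r2 R -> lbl r1 = lbl r2 -> r1 = r2.
Proof.
  induction R as [|a R IH]; intros ND H1 H2 E; [destruct H1|].
  simpl in ND. inversion ND as [|? ? Hn ND']; subst.
  destruct H1 as [<-|H1], H2 as [<-|H2]; auto.
  - exfalso; apply Hn; rewrite E; apply in_map; auto.
  - exfalso; apply Hn; rewrite <- E; apply in_map; auto.
Qed.

Lemma safe_cons_inv {F V L : Type} (R : list (rule F V L)) l p sg pis pi :
  safe_trace R (TT l p sg pis :: pi) ->
  exists rl0, In rl0 R /\ l = lbl rl0 /\ ground_subst sg /\
    (forall x, in_dom sg x <-> in_Vbeta rl0 x) /\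
    (forall pii, In pii pis -> safe_trace R pii) /\ safe_trace R pi.
Proof.
  intros H. inversion H as [|rl q s0 ps p0 Hi Hl Hg Hd Hps Hp]; subst. exists rl. repeat split; auto; apply Hd.
Qed.

Lemma cover {F V L : Type} (rl : rule F V L) x :
  (In x (vars (lhs rl)) \/ In x (vars (rhs rl)) \/
   exists c, In c (conds rl) /\ (In x (vars (fst c)) \/ In x (vars (snd c)))) ->
  in_vars_rhs_conds rl x \/ in_Vbeta rl x.
Proof.
  intros H. destruct (classic (in_vars_rhs_conds rl x)) as [|Hn]; [left; auto | right].
  unfold in_vars_rhs_conds in Hn.
  destruct (classic (exists c, In c (conds rl) /\ In x (vars (snd c)))) as [[c [Hc Hx]]|Hn2].
  - right. apply In_nth_error in Hc as [i Hi]. exists i, c. split; [auto|split; [auto|]].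
    intros [Hr | [j [c' [_ [Hj Hx']]]]]; apply Hn; [left; auto|].
    right; exists c'; split; [eapply nth_error_In; eauto | auto].
  - left. split.
    + destruct H as [H|[H|[c [Hc [H|H]]]]]; auto; exfalso.
      * apply Hn; left; auto.
      * apply Hn; right; eauto.
      * apply Hn2; eauto.
    + intros [Hr | [c [Hc [H1|H1]]]]; [apply Hn; left; auto | apply Hn; right; eauto | apply Hn2; eauto].
Qed.

Lemma r_not_Vbeta {F V L : Type} (rl : rule F V L) x :
  In x (vars (rhs rl)) -> ~ in_Vbeta rl x.
Proof. intros Hr [[_ H]|[i [c [_ [_ H]]]]]; apply H; left; auto. Qed.

Lemma fwd_src {F V L : Type} (R : list (rule F V L)) k a b : fwd R k a b -> safe_pair R a.
Proof. destruct k; simpl; [tauto | intros [H _]; exact H]. Qed.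

Lemma bwd_src {F V L : Type} (R : list (rule F V L)) k a b : bwd R k a b -> safe_pair R a.
Proof. destruct k; simpl; [tauto | intros [H _]; exact H]. Qed.

Lemma cond_ground {F V L : Type} (R : list (rule F V L)) (rl : rule F V L) k sg pis :
  Forall2 (fun c pii => star (fwd R k) (app_subst sg (fst c), [])
                                       (app_subst sg (snd c), pii)) (conds rl) pis ->
  (forall x, in_Vbeta rl x -> ground (sg x)) ->
  (forall x, In x (vars (rhs rl)) -> ground (sg x)) ->
  forall c, In c (conds rl) -> forall x, In x (vars (fst c)) \/ In x (vars (snd c)) -> ground (sg x).
Proof.
  intros HF HV Hr.
  assert (Hd : forall d j c, nth_error (conds rl) j = Some c -> length (conds rl) - j <= d ->
     (forall x, In x (vars (snd c)) -> ground (sg x)) /\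
     (forall x, In x (vars (fst c)) -> ground (sg x))).
  { induction d as [|d IH]; intros j c Hj Hd.
    - exfalso. assert (j < length (conds rl)) by (apply nth_error_Some; congruence). lia.
    - assert (Hjl : j < length (conds rl)) by (apply nth_error_Some; congruence).
      assert (Hsnd : forall x, In x (vars (snd c)) -> ground (sg x)).
      { intros x Hx. destruct (classic (in_Vbeta rl x)) as [HVx|HVx]; [auto|].
        destruct (classic (In x (vars (rhs rl)))) as [Hrx|Hrx]; [auto|].
        destruct (classic (exists j' c', j < j' /\ nth_error (conds rl) j' = Some c' /\
                              In x (vars (fst c')))) as [[j' [c' [Hjj [Hj' Hx']]]]|Hn].
        - assert (j' < length (conds rl)) by (apply nth_error_Some; congruence).
          apply (proj2 (IH j' c' Hj' ltac:(lia))); auto.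
        - exfalso. apply HVx. right. exists j, c. split; [auto|split; [auto|]].
          intros [H|H]; auto. }
      split; [exact Hsnd|].
      destruct (Forall2_nth _ _ _ _ _ HF Hj) as [pii [_ Hst]].
      apply star_inv in Hst as [E | [b Hb]].
      + injection E as E. apply ground_app. rewrite E. apply ground_app. exact Hsnd.
      + destruct k as [|k]; [destruct Hb|]. destruct Hb as [[Hg _] _].
        apply ground_app. exact Hg. }
  intros c Hc x [Hx|Hx]; apply In_nth_error in Hc as [j Hj];
    destruct (Hd _ _ _ Hj (le_n _)); auto.
Qed.

Lemma step_equiv {F V L : Type} (R : list (rule F V L)) (HR : dctrs R) :
  forall k a b, safe_pair R a -> safe_pair R b ->
    (fwd R k a b -> bwd R k b a) /\ (bwd R k b a -> fwd R k a b).
Proof.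
  induction k as [|k IH]; intros a b Ha Hb; [simpl; tauto|].
  assert (S1 : forall x y, star (fwd R k) x y -> safe_pair R y -> star (bwd R k) y x).
  { apply star_rev with (P := safe_pair R); [apply fwd_src|].
    intros a' b' Pa Pb H. apply (IH a' b' Pa Pb); auto. }
  assert (S2 : forall x y, star (bwd R k) y x -> safe_pair R x -> star (fwd R k) x y).
  { intros x y H Px. revert H Px. apply star_rev with (P := safe_pair R); [apply bwd_src|].
    intros a' b' Pa Pb H. apply (IH b' a' Pb Pa); auto. }
  split.
  - intros [_ [p [rl [sg [pis [t [sg' [Hin [Hg [Hsub [Hc [Hrep [Hres Hb']]]]]]]]]]]]].
    destruct a as [s pi]; subst b; simpl in *.
    destruct Hb as [Hgt Hst]. simpl in Hgt, Hst.
    destruct (safe_cons_inv _ _ _ _ _ _ Hst) as [rl0 [Hin0 [El [Hgs' [Hdom' [Hpis Hpi]]]]]].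
    assert (rl0 = rl) by (symmetry; apply (lbl_inj R); auto; apply HR). subst rl0.
    destruct Ha as [Hgs _]. simpl in Hgs.
    assert (HVg : forall x, in_Vbeta rl x -> ground (sg x)).
    { intros x Hx. destruct (Hres x) as [E _]. rewrite <- (E Hx). apply Hgs', Hdom', Hx. }
    assert (Hlg : forall x, In x (vars (lhs rl)) -> ground (sg x)).
    { apply ground_app. exact (sub_ground _ _ _ Hgs Hsub). }
    assert (Hrg : forall x, In x (vars (rhs rl)) -> ground (sg x)).
    { apply ground_app. exact (sub_ground _ _ _ Hgt (replace_sub _ _ _ _ Hrep)). }
    assert (Hcg := cond_ground R rl k sg pis Hc HVg Hrg).
    assert (Hallg : forall x, in_vars_rhs_conds rl x \/ in_Vbeta rl x -> ground (sg x)).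
    { intros x [[H|[c [H1 H2]]]|H]; eauto. }
    pose (th := fun x => if excluded_middle_informative (in_vars_rhs_conds rl x /\ ~ in_dom sg' x)
                         then sg x else Var x).
    assert (Hag : forall x, in_vars_rhs_conds rl x \/ in_Vbeta rl x ->
                            app_subst sg' (th x) = sg x).
    { intros x Hx. unfold th. destruct (excluded_middle_informative _) as [[H1 H2]|Hn].
      - apply app_ground. auto.
      - simpl. destruct (classic (in_Vbeta rl x)) as [HV|HV].
        + apply (Hres x); auto.
        + exfalso. destruct Hx as [Hx|Hx]; [|contradiction].
          apply HV, Hdom'. apply NNPP. intro H. apply Hn. auto. }
    assert (Hcov : forall u, (forall x, In x (vars u) ->
               In x (vars (lhs rl)) \/ In x (vars (rhs rl)) \/
               exists c, In c (conds rl) /\ (In x (vars (fst c)) \/ In x (vars (snd c)))) ->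
               app_subst sg' (app_subst th u) = app_subst sg u).
    { intros u Hu. rewrite app_comp. apply app_ext. intros x Hx. apply Hag, cover, Hu, Hx. }
    split; [split; simpl; auto|].
    exists t, p, sg', pis, pi, rl, th, s. split; [reflexivity|].
    split; [auto|]. split.
    { intros x Hx. unfold in_dom, th in *. destruct (excluded_middle_informative _) as [H|H].
      - apply Hallg; left; tauto.
      - exfalso; apply Hx; reflexivity. }
    split.
    { intros x. unfold in_dom, th. destruct (excluded_middle_informative _) as [H|H]; split; intros H'.
      - exact H.
      - apply ground_not_var, Hallg; left; tauto.
      - exfalso; apply H'; reflexivity.
      - contradiction. }
    split.
    { rewrite (replace_sub _ _ _ _ Hrep). f_equal. apply app_ext. intros x Hx.
      unfold th. destruct (excluded_middle_informative _) as [H|Hn]; [reflexivity|].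
      exfalso. apply Hn. split; [left; auto|]. intro Hd. apply (r_not_Vbeta rl x Hx), Hdom', Hd. }
    split.
    { refine (Forall2_impl_in _ _ _ _ _ Hc). intros c pii Hcin Hpin H. cbv beta in H |- *.
      rewrite !Hcov.
      - apply S1; [exact H|]. split; simpl; [|auto].
        apply ground_app. intros x Hx. apply Hcg with c; auto.
      - intros x Hx; right; right; eauto.
      - intros x Hx; right; right; eauto. }
    split; [|reflexivity].
    rewrite Hcov; [|intros x Hx; left; auto].
    rewrite (replace_replace _ _ _ _ _ Hrep). apply sub_replace; auto.
  - intros [_ [t [p [sg' [pis [pi [rl [th [s [Hb' [Hin [Hgth [Hdth [Hsub [Hc [Hrep Ha']]]]]]]]]]]]]]]].
    subst a b. destruct Hb as [Hgt Hst]. simpl in Hgt, Hst.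
    destruct (safe_cons_inv _ _ _ _ _ _ Hst) as [rl0 [Hin0 [El [Hgs' [Hdom' [Hpis Hpi]]]]]].
    assert (rl0 = rl) by (symmetry; apply (lbl_inj R); auto; apply HR). subst rl0.
    assert (Hthv : forall x, in_dom sg' x -> th x = Var x).
    { intros x Hx. apply NNPP. intro H. apply (proj2 (proj1 (Hdth x) H)). exact Hx. }
    assert (Hgs : forall x, in_vars_rhs_conds rl x \/ in_Vbeta rl x ->
                            ground (app_subst sg' (th x))).
    { intros x Hx. destruct (classic (in_dom sg' x)) as [Hd|Hd].
      - rewrite (Hthv x Hd). simpl. apply Hgs', Hd.
      - assert (Hi : in_dom th x).
        { apply Hdth. split; [|auto]. destruct Hx as [Hx|Hx]; auto.
          exfalso; apply Hd, Hdom', Hx. }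
        rewrite app_ground; apply Hgth; auto. }
    assert (Hrg : ground (app_subst th (rhs rl))) by (eapply sub_ground; eauto).
    split; [exact Ha|].
    exists p, rl, (fun x => app_subst sg' (th x)), pis, t, sg'.
    split; [auto|]. split.
    { intros x Hx. destruct (classic (in_dom th x)) as [Hd|Hd].
      - rewrite app_ground; apply Hgth; auto.
      - assert (th x = Var x) by (apply NNPP; exact Hd).
        unfold in_dom in Hx. rewrite H in Hx |- *. simpl in *. apply Hgs'. exact Hx. }
    split.
    { rewrite <- app_comp. eapply replace_sub; eauto. }
    split.
    { refine (Forall2_impl_in _ _ _ _ _ Hc). intros c pii Hcin Hpin H. cbv beta in H |- *.
      rewrite <- !app_comp. apply S2; [exact H|]. split; simpl; [|constructor].
      rewrite app_comp. apply ground_app. intros x Hx. apply Hgs. left; right; eauto. }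
    split.
    { rewrite <- app_comp. rewrite (app_ground sg' _ Hrg).
      rewrite (replace_replace _ _ _ _ _ Hrep). apply sub_replace; auto. }
    split; [|reflexivity].
    intros x. split.
    + intros Hx. rewrite (Hthv x (proj2 (Hdom' x) Hx)). reflexivity.
    + intros Hx. apply NNPP. intro H. apply Hx, Hdom', H.
Qed.

Theorem mainTheorem10 (F V L : Type) (R : list (rule F V L)) (HR : dctrs R)
  (s t : term F V) (pi pi' : trace F V L)
  (Hs : safe_pair R (s, pi)) (Ht : safe_pair R (t, pi'))
  (k m : nat) :
  nsteps (fwd R k) m (s, pi) (t, pi') <-> nsteps (bwd R k) m (t, pi') (s, pi).
Proof.
  split; intro H.
  - revert H Ht. apply nsteps_rev with (P := safe_pair R); [apply fwd_src|].
    intros a b Pa Pb Hab. apply (step_equiv R HR k a b Pa Pb); auto.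
  - revert H Hs. apply nsteps_rev with (P := safe_pair R); [apply bwd_src|].
    intros a b Pa Pb Hab. apply (step_equiv R HR k b a Pb Pa); auto.
Qed.
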